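(* Let $X$ be a compact Hausdorff space and $\mathcal F$ a left ultrafunctor from $X$ to $\mathsf{k\text{-}CompMet}$. Then $E=\coprod_{x\in X}\mathcal F(x)$ equipped with the topology $\tau$ (the unique topology whose ultrafilter convergence is the relation $q$) and the projection $\pi$ is a bundle of complete metric spaces bounded by $k$ over $X$. Moreover, if $\alpha:\mathcal F\to\mathcal F'$ is a natural transformation of left ultrafunctors, the map $\psi:\coprod_x\mathcal F(x)\to\coprod_x\mathcal F'(x)$ with $\psi|_{\mathcal F(x)}=\alpha_x$ is a morphism of bundles; this defines a functor $\mathcal L:\mathrm{LeftUlt}(X,\mathsf{k\text{-}CompMet})\to\mathrm{Bun}(\mathsf{k\text{-}CompMet},X)$.
   Context: Ultrafilter conventions: $\delta_s$ principal ultrafilter; pushforward $g\mu=\{B: g^{-1}(B)\in\mu\}$; $\int_S\nu_s\,d\mu$ is the ultrafilter with $B\in\int_S\nu_sd\mu$ iff $\{s:B\in\nu_s\}\in\mu$; for compact Hausdorff $X$, $\int_Sx_s\,d\mu$ is the limit of the pushforward of $\mu$ along $s\mapsto x_s$. $\mathsf{k\text{-}CompMet}$: complete metric spaces with distances $\le k$ and 1-Lipschitz maps; ultraproduct $\int_SM_s\,d\mu=\prod_sM_s/\sim$ with $(a_s)\sim(b_s)$ iff $\lim_\mu d(a_s,b_s)=0$ and metric $\lim_\mu d(a_s,b_s)$; $\int_S\psi_sd\mu$ acts coordinatewise. Left ultrafunctor $\mathcal F$ from $X$ to $\mathsf{k\text{-}CompMet}$: objects $\mathcal F(x)$ and, for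 each set $S$, family $(x_s)$ in $X$ and ultrafilter $\mu$ on $S$, 1-Lipschitz maps $\sigma_\mu:\mathcal F(\int_Sx_sd\mu)\to\int_S\mathcal F(x_s)d\mu$ satisfying (i) compatibility with principal ultrafilters ($\sigma_{\delta_{s_0}}$ composed with $\int_S\mathcal F(x_s)d\delta_{s_0}\cong\mathcal F(x_{s_0})$ is the identity) and (ii) $\Delta\circ\sigma_{\int_S\nu_sd\mu}=(\int_S\sigma_{\nu_s}d\mu)\circ\sigma_\mu$ for all $\mu$ on $S$, $(\nu_s)$ on $T$, $(x_t)_{t\in T}$, where $\Delta((b_t)_t)=((b_t)_t)_s$. A natural transformation of left ultrafunctors $\alpha:\mathcal F\to\mathcal G$ is a family of 1-Lipschitz maps $\alpha_x$ with $\sigma^{\mathcal G}_\mu\circ\alpha_{\int x_sd\mu}=(\int_S\alpha_{x_s}d\mu)\circ\sigma^{\mathcal F}_\mu$; these form the category $\mathrm{LeftUlt}(X,\mathsf{k\text{-}CompMet})$. The relation $\eta\,q\,f$ for an ultrafilter $\eta$ on $E$ and $f\in E$: $\pi\eta\to\pi(f)$ and, for a representative $(b_x)_{x\in X}$ of $\sigma_{\pi\eta}(f)$ (for the identity family on $X$), $\coprod_xB(b_x,\epsilon)\in\eta$ for all $\epsilon>0$. Bundles: for a surjection $\pi:E\to X$ of topological spaces whose fibres $E_x=\pi^{-1}(x)$ are metric spaces, $E\times_XE=\{(f,g):\pi f=\pi g\}$ with the subspace topology of $E\times E$ and global distance $d(f,g)=d_{\pi(f)}(f,g)$; for $V\subseteq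 E$ and $\epsilon>0$, $V_\epsilon=\{f\in E:\exists g\in V,\ \pi f=\pi g,\ d(f,g)<\epsilon\}$; for open $V,W$, ''$V\subseteq_\epsilon W$'' means $V\subseteq V_\epsilon\subseteq W$. A function $h$ into $[0,\infty]$ is upper semicontinuous iff $h^{-1}([0,r))$ is open for each $r$. A bundle of complete metric spaces bounded by $k$ over $X$ is such $(E,X,\pi)$ with every fibre complete with distances $\le k$, such that (1) $d:E\times_XE\to[0,k]$ is upper semicontinuous; (2) $\pi$ is continuous and open; (3) for every open $W\subseteq E$ and $f\in W$ there exist an open neighbourhood $V$ of $f$ and $\epsilon>0$ with $V\subseteq_\epsilon W$. A morphism of bundles over $X$ is a continuous $\psi:E\to E'$ with $\pi'\circ\psi=\pi$ and each $\psi|_{E_x}$ 1-Lipschitz. This gives the category $\mathrm{Bun}(\mathsf{k\text{-}CompMet},X)$. *)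

(* Defs.v *)
From Stdlib Require Import Reals List Classical ClassicalEpsilon
  ClassicalDescription FunctionalExtensionality PropExtensionality.


Open Scope R_scope.

Record Ultrafilter (S : Type) := {
  umem : (S -> Prop) -> Prop;
  u_full : umem (fun _ => True);
  u_nempty : ~ umem (fun _ => False);
  u_inter : forall A B, umem A -> umem B -> umem (fun s => A s /\ B s);
  u_up : forall A B : S -> Prop, umem A -> (forall s, A s -> B s) -> umem B;
  u_ultra : forall A, umem A \/ umem (fun s => ~ A s)
}.
Arguments umem {S} u _.
Arguments u_up {S u A B} _ _.
Arguments u_inter {S u A B} _ _.

Definition principal {S : Type} (s0 : S) : Ultrafilter S.
Proof.
  refine {| umem := fun A => A s0 |}; firstorder.
  destruct (classic (A s0)); auto.
Defined.

Definition push {S T : Type} (g : S -> T) (mu : Ultrafilter S) : Ultrafilter T.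
Proof.
  refine {| umem := fun B => umem mu (fun s => B (g s)) |}.
  - exact (@u_full _ mu).
  - exact (@u_nempty _ mu).
  - intros A B HA HB; exact (u_inter HA HB).
  - intros A B HA HAB; exact (u_up HA (fun s => HAB (g s))).
  - intros A; exact (@u_ultra _ mu (fun s => A (g s))).
Defined.

(* integral  \int_S nu_s dmu :  B in it  iff  {s | B in nu_s} in mu *)
Definition ubind {S T : Type} (mu : Ultrafilter S) (nu : S -> Ultrafilter T)
  : Ultrafilter T.
Proof.
  refine {| umem := fun B => umem mu (fun s => umem (nu s) B) |}.
  - apply (u_up (@u_full _ mu)); intros s _; exact (@u_full _ (nu s)).
  - intros H. apply (@u_nempty _ mu). apply (u_up H). intros s Hs.
    exact (@u_nempty _ (nu s) Hs).
  - intros A B HA HB. apply (u_up (u_inter HA HB)). intros s [Ha Hb].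
    exact (u_inter Ha Hb).
  - intros A B HA HAB. apply (u_up HA). intros s Hs. exact (u_up Hs HAB).
  - intros A. destruct (@u_ultra _ mu (fun s => umem (nu s) A)) as [H|H]; [left; exact H|].
    right. apply (u_up H). intros s Hs.
    destruct (@u_ultra _ (nu s) A); [contradiction|assumption].
Defined.

Lemma ultrafilter_inhabited {S : Type} (mu : Ultrafilter S) : inhabited S.
Proof.
  destruct (classic (inhabited S)) as [H|H]; [exact H|].
  exfalso. apply (@u_nempty _ mu). apply (u_up (@u_full _ mu)).
  intros s _. apply H. exact (inhabits s).
Qed.

Record Topology (T : Type) := {
  isopen : (T -> Prop) -> Prop;
  op_full : isopen (fun _ => True);
  op_inter : forall U V, isopen U -> isopen V -> isopen (fun t => U t /\ V t);
  op_union : forall (I : Type) (U : I -> T -> Prop),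
      (forall i, isopen (U i)) -> isopen (fun t => exists i, U i t)
}.
Arguments isopen {T} t _.

Definition conv {T : Type} (t : Topology T) (mu : Ultrafilter T) (x : T) : Prop :=
  forall U, isopen t U -> U x -> umem mu U.

Definition compact_space {X : Type} (t : Topology X) : Prop :=
  forall (I : Type) (U : I -> X -> Prop),
    (forall i, isopen t (U i)) -> (forall x, exists i, U i x) ->
    exists l : list I, forall x, exists i, In i l /\ U i x.

Definition hausdorff_space {X : Type} (t : Topology X) : Prop :=
  forall x y : X, x <> y -> exists U V, isopen t U /\ isopen t V /\ U x /\ V y /\
    forall z, ~ (U z /\ V z).

(* \int_S x_s dmu : a (for compact Hausdorff X: the) limit of the pushforward
   of mu along s |-> x_s *)
Definition ulim {S X : Type} (t : Topology X) (x : S -> X) (mu : Ultrafilter S) : X :=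
  epsilon (match ultrafilter_inhabited mu with inhabits s => inhabits (x s) end)
          (fun y => conv t (push x mu) y).

Definition rlim {S : Type} (mu : Ultrafilter S) (f : S -> R) : R :=
  epsilon (inhabits 0)
    (fun r => forall eps, eps > 0 -> umem mu (fun s => Rabs (f s - r) < eps)).

Record MSp := { car :> Type; dst : car -> car -> R }.
Arguments dst {m} _ _.

Definition cauchy_seq (M : MSp) (u : nat -> M) : Prop :=
  forall eps, eps > 0 -> exists N, forall m n, (N <= m)%nat -> (N <= n)%nat ->
    dst (u m) (u n) < eps.
Arguments cauchy_seq {M} u.

Definition is_kcompmet (k : R) (M : MSp) : Prop :=
  inhabited M /\
  (forall x : M, dst x x = 0) /\
  (forall x y : M, dst x y = 0 -> x = y) /\
  (forall x y : M, dst x y = dst y x) /\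
  (forall x y z : M, dst x z <= dst x y + dst y z) /\
  (forall x y : M, dst x y <= k) /\
  (forall u : nat -> M, cauchy_seq u -> exists l : M,
      forall eps, eps > 0 -> exists N, forall n, (N <= n)%nat -> dst (u n) l < eps).

Record CompMet (k : R) := { cm :> MSp; cm_ax : is_kcompmet k cm }.
Arguments cm {k} _.
Arguments cm_ax {k} _.

Definition uprel {S : Type} (M : S -> MSp) (mu : Ultrafilter S)
  (a b : forall s, M s) : Prop :=
  rlim mu (fun s => dst (a s) (b s)) = 0.

(* equivalence classes of the product under ~ *)
Definition UPcar {S : Type} (M : S -> MSp) (mu : Ultrafilter S) : Type :=
  { P : (forall s, M s) -> Prop | exists a, P = uprel M mu a }.

Definition up_class {S : Type} (M : S -> MSp) (mu : Ultrafilter S)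
  (a : forall s, M s) : UPcar M mu :=
  exist _ (uprel M mu a) (ex_intro _ a eq_refl).

Definition up_rep {S : Type} {M : S -> MSp} {mu : Ultrafilter S}
  (p : UPcar M mu) : forall s, M s :=
  proj1_sig (constructive_indefinite_description _ (proj2_sig p)).

Definition is_rep {S : Type} {M : S -> MSp} {mu : Ultrafilter S}
  (p : UPcar M mu) (b : forall s, M s) : Prop := proj1_sig p b.

Definition UP {S : Type} (M : S -> MSp) (mu : Ultrafilter S) : MSp :=
  {| car := UPcar M mu;
     dst := fun p q => rlim mu (fun s => dst (up_rep p s) (up_rep q s)) |}.

Definition up_map {S : Type} {M N : S -> MSp} {mu : Ultrafilter S}
  (psi : forall s, M s -> N s) (p : UP M mu) : UP N mu :=
  up_class N mu (fun s => psi s (up_rep p s)).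

Definition up_diag {S T : Type} {M : T -> MSp} {mu : Ultrafilter S}
  {nu : S -> Ultrafilter T} (p : UP M (ubind mu nu))
  : UP (fun s => UP M (nu s)) mu :=
  up_class (fun s => UP M (nu s)) mu (fun s => up_class M (nu s) (up_rep p)).

Record LeftUlt (k : R) (X : Type) (tX : Topology X) := {
  LF : X -> CompMet k;
  sigma : forall (S : Type) (x : S -> X) (mu : Ultrafilter S),
      cm (LF (ulim tX x mu)) -> UP (fun s => cm (LF (x s))) mu;
  sigma_lip : forall S x mu (f g : cm (LF (ulim tX x mu))),
      dst (sigma S x mu f) (sigma S x mu g) <= dst f g;
  (* (i): sigma_{delta_s0} followed by \int F(x_s) d delta_s0 ~= F(x_s0) is
     the identity (the two sides seen in the coproduct of the F(x)) *)
  sigma_principal : forall S (x : S -> X) (s0 : S)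
      (f : cm (LF (ulim tX x (principal s0)))),
      existT (fun y => car (cm (LF y))) (x s0)
             (up_rep (sigma S x (principal s0) f) s0)
      = existT (fun y => car (cm (LF y))) (ulim tX x (principal s0)) f;
  (* (ii): Delta o sigma_{\int nu_s dmu} = (\int sigma_{nu_s} dmu) o sigma_mu,
     the two domains being identified (as the same point of X) *)
  sigma_assoc : forall (S T : Type) (mu : Ultrafilter S)
      (nu : S -> Ultrafilter T) (x : T -> X)
      (f : cm (LF (ulim tX x (ubind mu nu))))
      (g : cm (LF (ulim tX (fun s => ulim tX x (nu s)) mu))),
      existT (fun y => car (cm (LF y))) _ f = existT (fun y => car (cm (LF y))) _ g ->
      up_diag (sigma T x (ubind mu nu) f)
      = up_map (fun s => sigma T x (nu s))
               (sigma S (fun s => ulim tX x (nu s)) mu g)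
}.
Arguments LF {k X tX} _ _.
Arguments sigma {k X tX} _ _ _ _ _.

Definition is_nat_trans {k : R} {X : Type} {tX : Topology X}
  (F G : LeftUlt k X tX) (alpha : forall x, cm (LF F x) -> cm (LF G x)) : Prop :=
  (forall x (f g : cm (LF F x)), dst (alpha x f) (alpha x g) <= dst f g) /\
  (forall S (x : S -> X) (mu : Ultrafilter S) (f : cm (LF F (ulim tX x mu))),
      sigma G S x mu (alpha (ulim tX x mu) f)
      = up_map (fun s => alpha (x s)) (sigma F S x mu f)).

Definition Tot {k : R} {X : Type} {tX : Topology X} (F : LeftUlt k X tX) : Type :=
  { x : X & car (cm (LF F x)) }.

Definition totproj {k : R} {X : Type} {tX : Topology X} {F : LeftUlt k X tX}
  (e : Tot F) : X := projT1 e.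

Definition totdist {k : R} {X : Type} {tX : Topology X} (F : LeftUlt k X tX)
  (e1 e2 : Tot F) (h : totproj e1 = totproj e2) : R :=
  dst (eq_rect _ (fun y => car (cm (LF F y))) (projT2 e1) _ h) (projT2 e2).

Definition qrel {k : R} {X : Type} {tX : Topology X} (F : LeftUlt k X tX)
  (eta : Ultrafilter (Tot F)) (f : Tot F) : Prop :=
  conv tX (push totproj eta) (totproj f) /\
  forall (g : cm (LF F (ulim tX (fun x : X => x) (push totproj eta)))),
    existT (fun y => car (cm (LF F y))) _ g = f ->
    forall b : forall x : X, car (cm (LF F x)),
      is_rep (sigma F X (fun x : X => x) (push totproj eta) g) b ->
      forall eps, eps > 0 ->
        umem eta (fun e : Tot F => dst (projT2 e) (b (projT1 e)) < eps).

Definition totmap {k : R} {X : Type} {tX : Topology X} {F G : LeftUlt k X tX}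
  (alpha : forall x, cm (LF F x) -> cm (LF G x)) (e : Tot F) : Tot G :=
  existT _ (projT1 e) (alpha (projT1 e) (projT2 e)).

Definition prod_open {E E' : Type} (tE : Topology E) (tE' : Topology E')
  (O : E * E' -> Prop) : Prop :=
  forall p, O p -> exists A B, isopen tE A /\ isopen tE' B /\ A (fst p) /\ B (snd p) /\
    forall a b, A a -> B b -> O (a, b).

Definition continuous_map {A B : Type} (tA : Topology A) (tB : Topology B)
  (f : A -> B) : Prop :=
  forall V, isopen tB V -> isopen tA (fun a => V (f a)).

Definition open_map {A B : Type} (tA : Topology A) (tB : Topology B)
  (f : A -> B) : Prop :=
  forall U, isopen tA U -> isopen tB (fun b => exists a, U a /\ f a = b).

Definition is_bundle (k : R) {E X : Type} (tE : Topology E) (tX : Topology X)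
  (pi : E -> X) (d : forall f g : E, pi f = pi g -> R) : Prop :=
  (forall x, exists e, pi e = x) /\
  (forall f (h : pi f = pi f), d f f h = 0) /\
  (forall f g (h : pi f = pi g), d f g h = 0 -> f = g) /\
  (forall f g (h : pi f = pi g), d f g h = d g f (eq_sym h)) /\
  (forall f g e (h1 : pi f = pi g) (h2 : pi g = pi e) (h3 : pi f = pi e),
      d f e h3 <= d f g h1 + d g e h2) /\
  (forall f g (h : pi f = pi g), d f g h <= k) /\
  (forall (x : X) (u : nat -> E), (forall n, pi (u n) = x) ->
     (forall eps, eps > 0 -> exists N, forall m n (h : pi (u m) = pi (u n)),
        (N <= m)%nat -> (N <= n)%nat -> d (u m) (u n) h < eps) ->
     exists l, pi l = x /\
       forall eps, eps > 0 -> exists N, forall n (h : pi (u n) = pi l),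
         (N <= n)%nat -> d (u n) l h < eps) /\
  (* (1) d : E x_X E -> [0,k] is upper semicontinuous (subspace topology) *)
  (forall r : R, exists O, prod_open tE tE O /\
     forall f g (h : pi f = pi g), d f g h < r <-> O (f, g)) /\
  continuous_map tE tX pi /\ open_map tE tX pi /\
  (forall (W : E -> Prop) (f : E), isopen tE W -> W f ->
     exists (V : E -> Prop) (eps : R), isopen tE V /\ V f /\ eps > 0 /\
       let Veps := fun e => exists g (h : pi e = pi g), V g /\ d e g h < eps in
       (forall e, V e -> Veps e) /\ (forall e, Veps e -> W e)).

Definition is_bundle_morphism {E E' X : Type} (tE : Topology E) (tE' : Topology E')
  (pi : E -> X) (pi' : E' -> X)
  (d : forall f g : E, pi f = pi g -> R) (d' : forall f g : E', pi' f = pi' g -> R)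
  (psi : E -> E') : Prop :=
  continuous_map tE tE' psi /\
  (forall e, pi' (psi e) = pi e) /\
  (forall f g (h : pi f = pi g) (h' : pi' (psi f) = pi' (psi g)),
      d' (psi f) (psi g) h' <= d f g h).

(* Main.v *)
From Stdlib Require Import Reals List Classical ClassicalEpsilon
  ClassicalDescription FunctionalExtensionality PropExtensionality ProofIrrelevance Lra.
Require Import Defs.
From mathcomp Require classical_sets filter.
Open Scope R_scope.


Module ULmod.
Import mathcomp.classical.classical_sets mathcomp.classical.filter.
Set Bullet Behavior "Strict Subproofs".
Lemma UL_aux (T : Type) (F : (T -> Prop) -> Prop) :
  F (fun _ => True) ->
  (forall A B, F A -> F B -> F (fun t => A t /\ B t)) ->
  (forall A, F A -> exists t, A t) ->
  exists H : (T -> Prop) -> Prop,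
    (forall A, F A -> H A) /\ H (fun _ => True) /\ ~ H (fun _ => False) /\
    (forall A B, H A -> H B -> H (fun t => A t /\ B t)) /\
    (forall A B : T -> Prop, H A -> (forall s, A s -> B s) -> H B) /\
    (forall A, H A \/ H (fun s => ~ A s)).
Proof.
  intros HT HI HN.
  pose (G := (fun A => exists B, F B /\ (forall t, B t -> A t)) : set_system T).
  assert (PG : ProperFilter G).
  { constructor.
    - intros [B [FB sB]]. destruct (HN B FB) as [t Bt]. exact (sB t Bt).
    - constructor.
      + exists (fun _ => True). split; auto.
      + intros A B [A' [FA sA]] [B' [FB sB]]. exists (fun t => A' t /\ B' t).
        split; [apply HI; auto|]. intros t [a b]; split; auto.
      + intros P Q PQ [B [FB sB]]. exists B; split; auto. }
  destruct (ultraFilterLemma PG) as [H [UH sGH]].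
  exists H. split; [|split;[|split;[|split;[|split]]]].
  - intros A FA. apply sGH. exists A; split; auto.
  - apply sGH. exists (fun _ => True); split; auto.
  - intro H0. apply (@filter_not_empty T H). exact (@ultra_proper T H UH). exact H0.
  - intros A B HA HB. pose proof (@filter_filter T H (@ultra_proper T H UH)) as FH.
    exact (@filterI T H FH A B HA HB).
  - intros A B HA AB. pose proof (@filter_filter T H (@ultra_proper T H UH)) as FH.
    exact (@filterS T H FH A B AB HA).
  - intros A. exact (in_ultra_setVsetC A UH).
Qed.
End ULmod.

Lemma UL (T : Type) (F : (T -> Prop) -> Prop) :
  F (fun _ => True) ->
  (forall A B, F A -> F B -> F (fun t => A t /\ B t)) ->
  (forall A, F A -> exists t, A t) ->
  exists U : Ultrafilter T, forall A, F A -> umem U A.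
Proof.
  intros a b c. destruct (ULmod.UL_aux T F a b c) as [H [h1 [h2 [h3 [h4 [h5 h6]]]]]].
  exists {| umem := H; u_full := h2; u_nempty := h3; u_inter := h4; u_up := h5; u_ultra := h6 |}.
  exact h1.
Qed.


Lemma uf_ext {S} (u v : Ultrafilter S) :
  (forall A, umem u A <-> umem v A) -> u = v.
Proof.
  intros H. destruct u as [mu a b c d e], v as [mv a' b' c' d' e']. simpl in H.
  assert (mu = mv) by (apply functional_extensionality; intro A;
                       apply propositional_extensionality; apply H).
  subst mv. f_equal; apply proof_irrelevance.
Qed.

Lemma uf_sub_eq {S} (u v : Ultrafilter S) :
  (forall A, umem u A -> umem v A) -> u = v.
Proof.
  intros H; apply uf_ext; intro A; split; [apply H|].
  intro HA. destruct (u_ultra _ u A) as [|Hn]; auto.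
  apply H in Hn. exfalso. apply (u_nempty _ v). apply (u_up (u_inter HA Hn)). tauto.
Qed.

Lemma u_true {S} (u : Ultrafilter S) A : (forall s, A s) -> umem u A.
Proof. intros H; apply (u_up (u_full _ u)); auto. Qed.

Lemma u_not_both {S} (u : Ultrafilter S) A : umem u A -> umem u (fun s => ~ A s) -> False.
Proof. intros H1 H2. apply (u_nempty _ u). apply (u_up (u_inter H1 H2)). tauto. Qed.

Lemma u_inh {S} (u : Ultrafilter S) A : umem u A -> exists s, A s.
Proof.
  intros H. apply NNPP; intro N. apply (u_nempty _ u). apply (u_up H).
  intros s As. apply N. eauto.
Qed.

Lemma u_and3 {S} (u : Ultrafilter S) A B C :
  umem u A -> umem u B -> umem u C -> umem u (fun s => A s /\ B s /\ C s).
Proof.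
  intros a b c. apply (u_up (u_inter a (u_inter b c))). auto.
Qed.

Lemma push_push {S T U} (f : S -> T) (g : T -> U) (u : Ultrafilter S) :
  push g (push f u) = push (fun s => g (f s)) u.
Proof. apply uf_ext; intros; simpl; tauto. Qed.

Lemma push_id {S} (u : Ultrafilter S) : push (fun s => s) u = u.
Proof. apply uf_ext; intros; simpl; tauto. Qed.

Lemma push_principal {S T} (f : S -> T) s0 : push f (principal s0) = principal (f s0).
Proof. apply uf_ext; intros; simpl; tauto. Qed.

Lemma push_const {S T} (u : Ultrafilter S) (t : T) : push (fun _ => t) u = principal t.
Proof.
  apply uf_ext; intros A; simpl; split.
  - intro H. destruct (u_inh _ _ H); auto.
  - intro H. apply u_true; auto.
Qed.

Lemma push_ubind {S T U} (mu : Ultrafilter S) (nu : S -> Ultrafilter T) (g : T -> U) :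
  push g (ubind mu nu) = ubind mu (fun s => push g (nu s)).
Proof. apply uf_ext; intros; simpl; tauto. Qed.

Lemma ubind_principal {S T} (mu : Ultrafilter S) (x : S -> T) :
  ubind mu (fun s => principal (x s)) = push x mu.
Proof. apply uf_ext; intros; simpl; tauto. Qed.

Section CH.
Variables (X : Type) (tX : Topology X).
Hypothesis cX : compact_space tX.
Hypothesis hX : hausdorff_space tX.

Lemma conv_unique (mu : Ultrafilter X) a b : conv tX mu a -> conv tX mu b -> a = b.
Proof.
  intros Ha Hb. apply NNPP; intro N.
  destruct (hX a b N) as [U [V [oU [oV [Ua [Vb D]]]]]].
  pose proof (Ha U oU Ua) as H1. pose proof (Hb V oV Vb) as H2.
  apply (u_nempty _ mu). apply (u_up (u_inter H1 H2)). intros s Hs. apply (D s Hs).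
Qed.

Lemma conv_exists (mu : Ultrafilter X) : exists a, conv tX mu a.
Proof.
  apply NNPP; intro N.
  assert (H : forall a, exists U, isopen tX U /\ U a /\ ~ umem mu U).
  { intro a. apply NNPP; intro N2. apply N. exists a. intros U oU Ua.
    apply NNPP; intro N3. apply N2. eauto. }
  pose (I := { U : X -> Prop | isopen tX U /\ ~ umem mu U }).
  assert (o1 : forall i : I, isopen tX (proj1_sig i)).
  { intro i; exact (proj1 (proj2_sig i)). }
  assert (o2 : forall a, exists i : I, proj1_sig i a).
  { intro a. destruct (H a) as [U [oU [Ua nU]]]. exists (exist _ U (conj oU nU)). exact Ua. }
  destruct (cX I (fun i => proj1_sig i) o1 o2) as [l Hl].
  - assert (Hc : forall l : list I, umem mu (fun x => forall i, In i l -> ~ proj1_sig i x)).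
    { intro l0; induction l0 as [|i l0 IH].
      + apply u_true. intros x i [].
      + destruct i as [U [oU nU]].
        destruct (u_ultra _ mu U) as [|HnU]; [contradiction|].
        apply (u_up (u_inter HnU IH)). intros x [h1 h2] j [<-|Hj]; simpl; auto. }
    destruct (u_inh _ _ (Hc l)) as [x Hx]. destruct (Hl x) as [i [Hi Ux]].
    exact (Hx i Hi Ux).
Qed.

Lemma ulim_conv {S} (x : S -> X) (mu : Ultrafilter S) : conv tX (push x mu) (ulim tX x mu).
Proof.
  unfold ulim. apply epsilon_spec. apply conv_exists.
Qed.

Lemma ulim_eq {S} (x : S -> X) (mu : Ultrafilter S) y :
  conv tX (push x mu) y -> ulim tX x mu = y.
Proof. intro H. apply (conv_unique (push x mu)); auto. apply ulim_conv. Qed.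

Lemma conv_principal (a : X) : conv tX (principal a) a.
Proof. intros U _ Ua. exact Ua. Qed.

Lemma ulim_principal {S} (x : S -> X) s0 : ulim tX x (principal s0) = x s0.
Proof. apply ulim_eq. rewrite push_principal. apply conv_principal. Qed.

Lemma conv_ubind {S} (mu : Ultrafilter S) (nu : S -> Ultrafilter X) (x : S -> X) z :
  (forall s, conv tX (nu s) (x s)) -> conv tX (push x mu) z -> conv tX (ubind mu nu) z.
Proof.
  intros H1 H2 U oU Uz. pose proof (H2 U oU Uz) as h. cbn in *. apply (u_up h). intros s Us. exact (H1 s U oU Us).
Qed.

Lemma ulim_ubind {S T} (mu : Ultrafilter S) (nu : S -> Ultrafilter T) (x : T -> X) :
  ulim tX x (ubind mu nu) = ulim tX (fun s => ulim tX x (nu s)) mu.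
Proof.
  apply ulim_eq. rewrite push_ubind. apply conv_ubind with (x := fun s => ulim tX x (nu s)).
  - intro s. apply ulim_conv.
  - apply ulim_conv.
Qed.

Lemma ulim_id_conv (mu : Ultrafilter X) y : conv tX mu y -> ulim tX (fun x => x) mu = y.
Proof. intro H. apply ulim_eq. rewrite push_id. exact H. Qed.
End CH.

Lemma nbhd_char {T} (t : Topology T) (e : T) (N : T -> Prop) :
  (forall eta, conv t eta e -> umem eta N) ->
  exists V, isopen t V /\ V e /\ forall a, V a -> N a.
Proof.
  intros H. apply NNPP; intro Hn.
  destruct (UL T (fun A => exists V, isopen t V /\ V e /\ forall a, V a /\ ~ N a -> A a))
    as [eta Heta].
  - exists (fun _ => True). split; [apply op_full|]. split; auto.
  - intros A B [V [oV [Ve HV]]] [W [oW [We HW]]].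
    exists (fun a => V a /\ W a). split; [apply op_inter; auto|]. split; auto.
    intros a [[Va Wa] Na]. split; auto.
  - intros A [V [oV [Ve HV]]]. apply NNPP; intro NA. apply Hn. exists V.
    split; auto. split; auto. intros a Va. apply NNPP; intro Na. apply NA. exists a. auto.
  - assert (c : conv t eta e).
    { intros U oU Ue. apply Heta. exists U. split; auto. split; auto. intros a [h _]; auto. }
    apply (u_not_both eta N); auto.
    apply Heta. exists (fun _ => True). split; [apply op_full|]. split; auto.
    intros a [_ h]; auto.
Qed.

Lemma open_char {T} (t : Topology T) (U : T -> Prop) :
  (forall eta e, conv t eta e -> U e -> umem eta U) -> isopen t U.
Proof.
  intros H.
  pose (I := { V : T -> Prop | isopen t V /\ forall a, V a -> U a }).
  assert (E : (fun a => exists i : I, proj1_sig i a) = U).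
  { apply functional_extensionality; intro a; apply propositional_extensionality; split.
    - intros [i Va]; exact (proj2 (proj2_sig i) a Va).
    - intro Ua. destruct (nbhd_char t a U (fun eta c => H eta a c Ua)) as [V [oV [Va HV]]].
      exists (exist _ V (conj oV HV)). exact Va. }
  rewrite <- E. apply op_union. intro i; exact (proj1 (proj2_sig i)).
Qed.


Lemma Rabs_le_inv' a b : Rabs a <= b -> - b <= a <= b.
Proof. unfold Rabs; destruct (Rcase_abs a); intros; split; lra. Qed.
Lemma Rabs_lt_inv' a b : Rabs a < b -> - b < a < b.
Proof. unfold Rabs; destruct (Rcase_abs a); intros; split; lra. Qed.

Section RL.
Variable S : Type.
Variable mu : Ultrafilter S.

Lemma rlim_exists (f : S -> R) K : (forall s, Rabs (f s) <= K) ->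
  exists r, forall eps, eps > 0 -> umem mu (fun s => Rabs (f s - r) < eps).
Proof.
  intros HK.
  pose (A := fun t => umem mu (fun s => t <= f s)).
  assert (bA : bound A).
  { exists (K + 1). intros t At. apply Rnot_lt_le; intro Ht.
    apply (u_nempty _ mu). apply (u_up At). intros s Hs.
    pose proof (HK s) as h. apply Rabs_le_inv' in h. lra. }
  assert (nA : exists t, A t).
  { exists (- K). apply u_true. intros s. pose proof (HK s) as h. apply Rabs_le_inv' in h. lra. }
  destruct (completeness A bA nA) as [r [ub lub]].
  exists r. intros eps He.
  assert (h1 : exists t, A t /\ t > r - eps).
  { apply NNPP; intro N. assert (r <= r - eps); [|lra].
    apply lub. intros t At. apply Rnot_lt_le; intro Ht. apply N. exists t; split; auto; lra. }
  destruct h1 as [t [At Ht]].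
  assert (h2 : ~ A (r + eps / 2)).
  { intro H. pose proof (ub _ H). lra. }
  destruct (u_ultra _ mu (fun s => r + eps / 2 <= f s)) as [H|H]; [contradiction|].
  apply (u_up (u_inter At H)). intros s [a b]. apply Rabs_def1; lra.
Qed.

Lemma rlim_spec (f : S -> R) K : (forall s, Rabs (f s) <= K) ->
  forall eps, eps > 0 -> umem mu (fun s => Rabs (f s - rlim mu f) < eps).
Proof.
  intros HK. unfold rlim. apply (epsilon_spec (inhabits 0)
     (fun r => forall eps, eps > 0 -> umem mu (fun s => Rabs (f s - r) < eps))).
  eapply rlim_exists; eauto.
Qed.

Lemma rlim_unique (f : S -> R) K r : (forall s, Rabs (f s) <= K) ->
  (forall eps, eps > 0 -> umem mu (fun s => Rabs (f s - r) < eps)) -> rlim mu f = r.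
Proof.
  intros HK H. apply NNPP; intro N.
  pose (e := Rabs (rlim mu f - r) / 2).
  assert (He : e > 0). { unfold e. assert (0 < Rabs (rlim mu f - r)); [|lra].
    apply Rabs_pos_lt. intro; apply N; lra. }
  pose proof (u_inter (H e He) (rlim_spec f K HK e He)) as h.
  destruct (u_inh _ _ h) as [s [a b]].
  assert (Rabs (rlim mu f - r) <= Rabs (f s - r) + Rabs (f s - rlim mu f)).
  { replace (rlim mu f - r) with ((f s - r) - (f s - rlim mu f)) by ring.
    eapply Rle_trans; [apply Rabs_triang|]. rewrite Rabs_Ropp. lra. }
  unfold e in *. lra.
Qed.

Lemma rlim_lt (f : S -> R) K c : (forall s, Rabs (f s) <= K) ->
  rlim mu f < c -> umem mu (fun s => f s < c).
Proof.
  intros HK H. apply (u_up (rlim_spec f K HK (c - rlim mu f) ltac:(lra))).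
  intros s h. apply Rabs_lt_inv' in h. lra.
Qed.

Lemma rlim_gt (f : S -> R) K c : (forall s, Rabs (f s) <= K) ->
  c < rlim mu f -> umem mu (fun s => c < f s).
Proof.
  intros HK H. apply (u_up (rlim_spec f K HK (rlim mu f - c) ltac:(lra))).
  intros s h. apply Rabs_lt_inv' in h. lra.
Qed.

Lemma rlim_le (f : S -> R) K c : (forall s, Rabs (f s) <= K) ->
  umem mu (fun s => f s <= c) -> rlim mu f <= c.
Proof.
  intros HK H. apply Rnot_lt_le; intro Hc.
  apply (u_not_both mu _ H). apply (u_up (rlim_gt f K c HK Hc)). intros; lra.
Qed.

Lemma rlim_ge (f : S -> R) K c : (forall s, Rabs (f s) <= K) ->
  umem mu (fun s => c <= f s) -> c <= rlim mu f.
Proof.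
  intros HK H. apply Rnot_lt_le; intro Hc.
  apply (u_not_both mu _ H). apply (u_up (rlim_lt f K c HK Hc)). intros; lra.
Qed.

Lemma rlim_zero_iff (f : S -> R) K : (forall s, 0 <= f s <= K) ->
  rlim mu f = 0 <-> forall eps, eps > 0 -> umem mu (fun s => f s < eps).
Proof.
  intros HK.
  assert (HK' : forall s, Rabs (f s) <= K).
  { intro s. rewrite Rabs_right; [apply HK|]. apply Rle_ge, HK. }
  split.
  - intros H eps He. apply (rlim_lt f K); auto. lra.
  - intros H. apply (rlim_unique f K); auto. intros eps He.
    apply (u_up (H eps He)). intros s h. rewrite Rminus_0_r, Rabs_right; auto.
    apply Rle_ge, HK.
Qed.
End RL.

Definition bnd (k : R) (M : MSp) : Prop :=
  (forall x : M, dst x x = 0) /\ (forall x y : M, 0 <= dst x y <= k).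

Lemma kcm_bnd k M : is_kcompmet k M -> bnd k M.
Proof.
  intros [_ [h0 [_ [hs [ht [hk _]]]]]]. split; auto.
  intros x y. split; auto.
  pose proof (ht x y x). rewrite h0, (hs y x) in H. lra.
Qed.

Lemma kcm_triang k (M : MSp) : is_kcompmet k M -> forall x y z : M, dst x z <= dst x y + dst y z.
Proof. intros [_ [_ [_ [_ [ht _]]]]]; exact ht. Qed.
Lemma kcm_sym k (M : MSp) : is_kcompmet k M -> forall x y : M, dst x y = dst y x.
Proof. intros [_ [_ [_ [hs _]]]]; exact hs. Qed.
Lemma kcm_zero k (M : MSp) : is_kcompmet k M -> forall x y : M, dst x y = 0 -> x = y.
Proof. intros [_ [_ [hz _]]]; exact hz. Qed.

Section UPL.
Variables (k : R) (S : Type) (M : S -> MSp) (mu : Ultrafilter S).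
Hypothesis HM : forall s, bnd k (M s).

Definition close (a b : forall s, M s) : Prop :=
  forall eps, eps > 0 -> umem mu (fun s => dst (a s) (b s) < eps).

Lemma bndabs s (x y : M s) : Rabs (dst x y) <= k.
Proof. destruct (HM s) as [_ h]. rewrite Rabs_right; [apply h|apply Rle_ge, h]. Qed.

Lemma uprel_close a b : uprel M mu a b <-> close a b.
Proof.
  unfold uprel. apply (rlim_zero_iff S mu _ k). intro s. apply (HM s).
Qed.

Lemma close_refl a : close a a.
Proof. intros eps He. apply u_true. intro s. rewrite (proj1 (HM s)). lra. Qed.

Lemma uprel_refl a : uprel M mu a a.
Proof. apply uprel_close, close_refl. Qed.

Lemma up_rep_spec (p : UPcar M mu) : proj1_sig p = uprel M mu (up_rep p).
Proof.
  unfold up_rep. destruct (constructive_indefinite_description _ (proj2_sig p)) as [a Ha].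
  exact Ha.
Qed.

Lemma is_rep_iff (p : UPcar M mu) b : is_rep p b <-> close (up_rep p) b.
Proof. unfold is_rep. rewrite up_rep_spec. apply uprel_close. Qed.

Lemma is_rep_up_rep (p : UPcar M mu) : is_rep p (up_rep p).
Proof. apply is_rep_iff, close_refl. Qed.

Lemma up_rep_class a : close (up_rep (up_class M mu a)) a.
Proof.
  apply uprel_close. rewrite <- up_rep_spec. simpl. apply uprel_refl.
Qed.

Lemma class_eq_close a b : up_class M mu a = up_class M mu b -> close a b.
Proof.
  intro H. apply (f_equal (@proj1_sig _ _)) in H. simpl in H.
  apply uprel_close. rewrite H. apply uprel_refl.
Qed.

Lemma UP_bnd : bnd k (UP M mu).
Proof.
  split.
  - intros p. simpl. apply (rlim_unique S mu _ k).
    + intro s. apply bndabs.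
    + intros eps He. apply u_true. intro s. rewrite (proj1 (HM s)).
      rewrite Rminus_0_r, Rabs_R0. lra.
  - intros p q. simpl. split.
    + apply (rlim_ge S mu _ k). intro s; apply bndabs. apply u_true. intro s. apply (HM s).
    + apply (rlim_le S mu _ k). intro s; apply bndabs. apply u_true. intro s. apply (HM s).
Qed.
End UPL.


Section TotF.
Variables (k : R) (X : Type) (tX : Topology X).
Hypothesis cX : compact_space tX.
Hypothesis hX : hausdorff_space tX.
Variable F : LeftUlt k X tX.

Local Notation Fx y := (cm (LF F y)).
Lemma HF y : is_kcompmet k (Fx y). Proof. exact (cm_ax (LF F y)). Qed.
Lemma HFb y : bnd k (Fx y). Proof. apply kcm_bnd, HF. Qed.

Definition Dlt (e1 e2 : Tot F) (r : R) : Prop :=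
  exists h : projT1 e1 = projT1 e2, totdist F e1 e2 h < r.

Lemma totdist_mk y (a b : Fx y) (h : y = y) :
  totdist F (existT _ y a) (existT _ y b) h = dst a b.
Proof. rewrite (proof_irrelevance _ h eq_refl). reflexivity. Qed.

Lemma Dlt_mk y (a b : Fx y) r : Dlt (existT _ y a) (existT _ y b) r <-> dst a b < r.
Proof.
  split.
  - intros [h H]. rewrite totdist_mk in H. exact H.
  - intros H. exists eq_refl. exact H.
Qed.

Lemma Dlt_fib e1 e2 r : Dlt e1 e2 r -> projT1 e1 = projT1 e2.
Proof. intros [h _]; exact h. Qed.

Ltac dest_tot :=
  repeat match goal with
  | e : Tot F |- _ => let y := fresh "y" in let a := fresh "a" in destruct e as [y a]
  end.

Lemma Dlt_sym e1 e2 r : Dlt e1 e2 r -> Dlt e2 e1 r.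
Proof.
  dest_tot. intros H. pose proof (Dlt_fib _ _ _ H) as h. simpl in h. subst.
  apply Dlt_mk. apply Dlt_mk in H. rewrite (kcm_sym k _ (HF _)). exact H.
Qed.

Lemma Dlt_trans e1 e2 e3 r s : Dlt e1 e2 r -> Dlt e2 e3 s -> Dlt e1 e3 (r + s).
Proof.
  destruct e1 as [y1 a1], e2 as [y2 a2], e3 as [y3 a3].
  intros H H'. pose proof (Dlt_fib _ _ _ H) as h. pose proof (Dlt_fib _ _ _ H') as h'.
  simpl in h, h'. subst.
  apply Dlt_mk. apply Dlt_mk in H. apply Dlt_mk in H'.
  pose proof (kcm_triang k _ (HF y3) a1 a2 a3). lra.
Qed.

Lemma Dlt_mono e1 e2 r s : Dlt e1 e2 r -> r <= s -> Dlt e1 e2 s.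
Proof. intros [h H] Hr. exists h. lra. Qed.

Lemma Dlt_refl e r : r > 0 -> Dlt e e r.
Proof. destruct e as [y a]. intro. apply Dlt_mk. rewrite (proj1 (HFb y)). lra. Qed.

Lemma Dlt_zero e1 e2 : (forall eps, eps > 0 -> Dlt e1 e2 eps) -> e1 = e2.
Proof.
  destruct e1 as [y1 a1], e2 as [y2 a2].
  intros H. pose proof (Dlt_fib _ _ _ (H 1 ltac:(lra))) as h. simpl in h. subst.
  f_equal. apply (kcm_zero k _ (HF y2)). apply Rle_antisym; [|apply (HFb y2)].
  apply Rnot_lt_le; intro Hc. pose proof (H _ Hc) as H1. apply Dlt_mk in H1. lra.
Qed.

Lemma Dlt_same (e : Tot F) y (a : Fx y) : projT1 e = y -> exists a', e = existT _ y a'.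
Proof. destruct e as [y' a']. simpl. intro E. subst. eauto. Qed.

Definition SRep {S} (x : S -> X) (mu : Ultrafilter S) (f : Tot F) (b : S -> Tot F) : Prop :=
  exists g : Fx (ulim tX x mu), existT _ (ulim tX x mu) g = f /\
  exists b0 : forall s, Fx (x s), is_rep (sigma F S x mu g) b0 /\
    forall s, b s = existT _ (x s) (b0 s).

Definition Tclose {S} (mu : Ultrafilter S) (b b' : S -> Tot F) : Prop :=
  forall eps, eps > 0 -> umem mu (fun s => Dlt (b s) (b' s) eps).

Lemma SRep_canon {S} (x : S -> X) mu g :
  SRep x mu (existT _ (ulim tX x mu) g)
       (fun s => existT _ (x s) (up_rep (sigma F S x mu g) s)).
Proof.
  exists g. split; auto. exists (up_rep (sigma F S x mu g)). split; auto.
  apply (is_rep_up_rep k). intro s; apply HFb.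
Qed.

Lemma SRep_exists {S} (x : S -> X) mu f : projT1 f = ulim tX x mu -> exists b, SRep x mu f b.
Proof.
  destruct f as [y a]. simpl. intro E. subst y. eexists. apply SRep_canon.
Qed.

Lemma SRep_fib {S} (x : S -> X) mu f b : SRep x mu f b -> forall s, projT1 (b s) = x s.
Proof. intros [g [_ [b0 [_ Hb]]]] s. rewrite Hb. reflexivity. Qed.

Lemma SRep_fibf {S} (x : S -> X) mu f b : SRep x mu f b -> projT1 f = ulim tX x mu.
Proof. intros [g [E _]]. rewrite <- E. reflexivity. Qed.

Lemma close_Tclose {S} (x : S -> X) mu (a b : forall s, Fx (x s)) :
  close S (fun s => Fx (x s)) mu a b ->
  Tclose mu (fun s => existT _ (x s) (a s)) (fun s => existT _ (x s) (b s)).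
Proof.
  intros H eps He. apply (u_up (H eps He)). intros s Hs. apply Dlt_mk. exact Hs.
Qed.

Lemma Tclose_sym {S} (mu : Ultrafilter S) b b' : Tclose mu b b' -> Tclose mu b' b.
Proof. intros H eps He. apply (u_up (H eps He)). intros s; apply Dlt_sym. Qed.

Lemma Tclose_trans {S} (mu : Ultrafilter S) b b' b'' :
  Tclose mu b b' -> Tclose mu b' b'' -> Tclose mu b b''.
Proof.
  intros H H' eps He. apply (u_up (u_inter (H (eps/2) ltac:(lra)) (H' (eps/2) ltac:(lra)))).
  intros s [h h']. pose proof (Dlt_trans _ _ _ _ _ h h') as D3. eapply Dlt_mono; [exact D3|lra].
Qed.

Lemma SRep_up_rep {S} (x : S -> X) mu f b :
  SRep x mu f b -> exists g, existT _ (ulim tX x mu) g = f /\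
    Tclose mu b (fun s => existT _ (x s) (up_rep (sigma F S x mu g) s)).
Proof.
  intros [g [E [b0 [Hr Hb]]]]. exists g. split; auto.
  apply (is_rep_iff k) in Hr; [|intro; apply HFb].
  intros eps He. apply (u_up (Hr eps He)). intros s Hs. rewrite Hb. apply Dlt_mk.
  rewrite (kcm_sym k _ (HF _)). exact Hs.
Qed.

Lemma SRep_close {S} (x : S -> X) mu f b b' :
  SRep x mu f b -> SRep x mu f b' -> Tclose mu b b'.
Proof.
  intros H H'. destruct (SRep_up_rep _ _ _ _ H) as [g [E C]].
  destruct (SRep_up_rep _ _ _ _ H') as [g' [E' C']].
  rewrite <- E' in E. apply inj_pair2 in E. subst g'.
  eapply Tclose_trans; [exact C|]. apply Tclose_sym; exact C'.
Qed.

Lemma SRep_principal {S} (x : S -> X) s0 f b : SRep x (principal s0) f b -> b s0 = f.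
Proof.
  intros H. destruct (SRep_up_rep _ _ _ _ H) as [g [E C]].
  pose proof (sigma_principal _ _ _ F S x s0 g) as P.
  rewrite E in P. rewrite <- P. apply Dlt_zero. intros eps He. exact (C eps He).
Qed.

Lemma SRep_lip {S} (x : S -> X) mu f f' b b' r :
  SRep x mu f b -> SRep x mu f' b' -> Dlt f f' r ->
  forall eps, eps > 0 -> umem mu (fun s => Dlt (b s) (b' s) (r + eps)).
Proof.
  intros H H' D eps He.
  destruct (SRep_up_rep _ _ _ _ H) as [g [E C]].
  destruct (SRep_up_rep _ _ _ _ H') as [g' [E' C']].
  subst f f'. apply Dlt_mk in D.
  pose proof (sigma_lip _ _ _ F S x mu g g') as L.
  assert (Hlt : dst (sigma F S x mu g) (sigma F S x mu g') < r) by lra.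
  simpl in Hlt.
  pose proof (rlim_lt S mu _ k r (fun s => bndabs k S (fun s => Fx (x s)) (fun s => HFb _) s _ _) Hlt) as U.
  apply (u_up (u_and3 _ _ _ _ U (C (eps/2) ltac:(lra)) (C' (eps/2) ltac:(lra)))).
  intros s [h1 [h2 h3]].
  assert (h1' : Dlt (existT _ (x s) (up_rep (sigma F S x mu g) s))
                    (existT _ (x s) (up_rep (sigma F S x mu g') s)) r) by (apply Dlt_mk; exact h1).
  pose proof (Dlt_trans _ _ _ _ _ (Dlt_trans _ _ _ _ _ h2 h1') (Dlt_sym _ _ _ h3)) as D3.
  eapply Dlt_mono; [exact D3|lra].
Qed.
End TotF.


Section TotF2.
Variables (k : R) (X : Type) (tX : Topology X).
Hypothesis cX : compact_space tX.
Hypothesis hX : hausdorff_space tX.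
Variable F : LeftUlt k X tX.
Local Notation Fx y := (cm (LF F y)).
Local Notation Dlt := (Dlt k X tX F).
Local Notation SRep := (SRep k X tX F).
Local Notation Tclose := (Tclose k X tX F).

Lemma SRep_assoc {S T} (mu : Ultrafilter S) (nu : S -> Ultrafilter T) (x : T -> X) f b c c' :
  SRep x (ubind mu nu) f b -> SRep (fun s => ulim tX x (nu s)) mu f c ->
  (forall s, SRep x (nu s) (c s) (c' s)) ->
  forall eps, eps > 0 -> umem mu (fun s => umem (nu s) (fun t => Dlt (b t) (c' s t) eps)).
Proof.
  intros Hb Hc Hc' eps He.
  destruct (SRep_up_rep k X tX F _ _ _ _ Hb) as [ga [Ea Cb]].
  destruct (SRep_up_rep k X tX F _ _ _ _ Hc) as [gb [Eb Cc]].
  assert (Eab : existT (fun y => car (cm (LF F y))) _ ga = existT (fun y => car (cm (LF F y))) _ gb)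
    by (rewrite Ea, Eb; reflexivity).
  pose proof (sigma_assoc _ _ _ F S T mu nu x ga gb Eab) as A.
  set (P := sigma F T x (ubind mu nu) ga) in *.
  set (Q := sigma F S (fun s => ulim tX x (nu s)) mu gb) in *.
  unfold up_diag, up_map in A.
  pose proof (class_eq_close k S (fun s => UP (fun t => Fx (x t)) (nu s)) mu
     (fun s => UP_bnd k T (fun t => Fx (x t)) (nu s) (fun t => HFb k X tX F _)) _ _ A) as CA.
  set (d := eps / 5).
  assert (Hd : d > 0) by (unfold d; lra).
  pose proof (Cb d Hd) as Cb'. cbn in Cb'.
  apply (u_up (u_and3 _ _ _ _ (CA d Hd) Cb' (Cc d Hd))).
  intros s [h1 [h2 h3]].
  set (p1 := up_class (fun t => Fx (x t)) (nu s) (up_rep P)) in *.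
  set (p2 := sigma F T x (nu s) (up_rep Q s)) in *.
  simpl in h1.
  pose proof (rlim_lt T (nu s) _ k d
     (fun t => bndabs k T (fun t => Fx (x t)) (fun t => HFb k X tX F _) t _ _) h1) as R1.
  pose proof (up_rep_class k T (fun t => Fx (x t)) (nu s) (fun t => HFb k X tX F _) (up_rep P) d Hd) as R2.
  pose proof (SRep_lip k X tX F x (nu s) _ _ _ _ d (Hc' s) (SRep_canon k X tX F x (nu s) (up_rep Q s)) h3 d Hd) as R3.
  apply (u_up (u_inter (u_and3 _ _ _ _ R1 R2 h2) R3)).
  intros t [[r1 [r2 r4]] r3]. fold p2 in r3.
  assert (D1 : Dlt (existT _ (x t) (up_rep P t)) (existT _ (x t) (up_rep p1 t)) d).
  { apply Dlt_mk. rewrite (kcm_sym k _ (HF k X tX F _)). exact r2. }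
  assert (D2 : Dlt (existT _ (x t) (up_rep p1 t)) (existT _ (x t) (up_rep p2 t)) d).
  { apply Dlt_mk. exact r1. }
  pose proof (Dlt_trans k X tX F _ _ _ _ _ (Dlt_trans k X tX F _ _ _ _ _ (Dlt_trans k X tX F _ _ _ _ _ r4 D1) D2)
       (Dlt_sym k X tX F _ _ _ r3)) as D3.
  eapply Dlt_mono; [exact D3|]. unfold d; lra.
Qed.

Lemma qrel_iff eta f :
  qrel F eta f <-> conv tX (push totproj eta) (projT1 f) /\
    forall b, SRep (fun y => y) (push totproj eta) f b ->
      forall eps, eps > 0 -> umem eta (fun e => Dlt e (b (projT1 e)) eps).
Proof.
  split.
  - intros [Hc Hq]. split; [exact Hc|].
    intros b [g [E [b0 [Hr Hb]]]] eps He.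
    apply (u_up (Hq g E b0 Hr eps He)). intros [y a] Hd. rewrite Hb. apply Dlt_mk. exact Hd.
  - intros [Hc Hq]. split; [exact Hc|].
    intros g E b0 Hr eps He.
    assert (Hs : SRep (fun y => y) (push totproj eta) f (fun y => existT _ y (b0 y))).
    { exists g. split; auto. exists b0. split; auto. }
    apply (u_up (Hq _ Hs eps He)). intros [y a] Hd. apply Dlt_mk in Hd. exact Hd.
Qed.

Lemma qrel_conv eta f : qrel F eta f -> conv tX (push totproj eta) (projT1 f).
Proof. intros [h _]; exact h. Qed.

Lemma qrel_use eta f b : qrel F eta f -> SRep (fun y => y) (push totproj eta) f b ->
  forall eps, eps > 0 -> umem eta (fun e => Dlt e (b (projT1 e)) eps).
Proof. intros H. apply qrel_iff in H. apply H. Qed.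

Lemma qrel_b eta f : qrel F eta f -> exists b, SRep (fun y => y) (push totproj eta) f b.
Proof.
  intros H. apply SRep_exists. symmetry. apply ulim_id_conv; auto. apply qrel_conv; auto.
Qed.

Lemma qrel_intro eta f b : conv tX (push totproj eta) (projT1 f) ->
  SRep (fun y => y) (push totproj eta) f b ->
  (forall eps, eps > 0 -> umem eta (fun e => Dlt e (b (projT1 e)) eps)) -> qrel F eta f.
Proof.
  intros Hc Hb Hq. apply qrel_iff. split; auto.
  intros b' Hb' eps He.
  pose proof (SRep_close k X tX F _ _ _ _ _ Hb Hb' (eps/2) ltac:(lra)) as C. cbn in C.
  apply (u_up (u_inter (Hq (eps/2) ltac:(lra)) C)). intros e [h1 h2].
  pose proof (Dlt_trans k X tX F _ _ _ _ _ h1 h2) as D. eapply Dlt_mono; [exact D|lra].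
Qed.
End TotF2.


Lemma fchoice {I : Type} {B : I -> Type} (P : forall i, B i -> Prop) :
  (forall i, exists y, P i y) -> exists f : forall i, B i, forall i, P i (f i).
Proof.
  intros H. exists (fun i => proj1_sig (constructive_indefinite_description _ (H i))).
  intro i. exact (proj2_sig (constructive_indefinite_description _ (H i))).
Qed.

Section Barr.
Variables (k : R) (X : Type) (tX : Topology X).
Hypothesis cX : compact_space tX.
Hypothesis hX : hausdorff_space tX.
Variable F : LeftUlt k X tX.
Local Notation Fx y := (cm (LF F y)).
Local Notation Dlt := (Dlt k X tX F).
Local Notation SRep := (SRep k X tX F).

Lemma qrel_principal f : qrel F (principal f) f.
Proof.
  assert (E : push totproj (principal f) = principal (projT1 f)) by (apply uf_ext; cbn; tauto).
  assert (Hc : conv tX (push totproj (principal f)) (projT1 f)).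
  { rewrite E. apply conv_principal. }
  destruct (SRep_exists k X tX F (fun y => y) (push totproj (principal f)) f) as [b Hb].
  { symmetry. apply ulim_id_conv; auto. }
  apply (qrel_intro k X tX F _ _ b Hc Hb).
  intros eps He. cbn. rewrite E in Hb. apply SRep_principal in Hb. rewrite Hb.
  apply Dlt_refl; auto.
Qed.

Lemma qrel_mult (I : Type) (XX : Ultrafilter I) (eta : I -> Ultrafilter (Tot F))
  (fi : I -> Tot F) (g : Tot F) :
  (forall i, qrel F (eta i) (fi i)) -> qrel F (push fi XX) g -> qrel F (ubind XX eta) g.
Proof.
  intros Hi Hg.
  pose (mu := fun i => push totproj (eta i)).
  pose (x := fun i => projT1 (fi i)).
  assert (Hmu : forall i, conv tX (mu i) (x i)) by (intro i; apply qrel_conv, Hi).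
  assert (Hnu : conv tX (push x XX) (projT1 g)).
  { pose proof (qrel_conv k X tX F _ _ Hg) as h.
    assert (E : push totproj (push fi XX) = push x XX) by (apply uf_ext; cbn; tauto).
    rewrite E in h. exact h. }
  assert (Ebind : push totproj (ubind XX eta) = ubind XX mu) by (apply uf_ext; cbn; tauto).
  assert (Hc : conv tX (push totproj (ubind XX eta)) (projT1 g)).
  { rewrite Ebind. apply conv_ubind with (x := x); auto. }
  destruct (SRep_exists k X tX F (fun y => y) (push totproj (ubind XX eta)) g) as [b Hb].
  { symmetry. apply ulim_id_conv; auto. }
  apply (qrel_intro k X tX F _ _ b Hc Hb).
  rewrite Ebind in Hb.
  assert (Exf : (fun i => ulim tX (fun y => y) (mu i)) = x).
  { apply functional_extensionality; intro i. apply ulim_id_conv; auto. }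
  assert (Exp : (fun i => ulim tX (fun y => y) (principal (x i))) = x).
  { apply functional_extensionality; intro i. apply ulim_principal; auto. }
  destruct (SRep_exists k X tX F x XX g) as [c Hcc].
  { symmetry. apply ulim_eq; auto. }
  destruct (fchoice (fun i (b' : X -> Tot F) => SRep (fun y => y) (mu i) (c i) b')) as [c' Hc'].
  { intro i. apply SRep_exists. rewrite (SRep_fib k X tX F _ _ _ _ Hcc). 
    symmetry. apply ulim_id_conv; auto. }
  destruct (fchoice (fun i (b' : X -> Tot F) => SRep (fun y => y) (principal (x i)) (c i) b')) as [c'' Hc''].
  { intro i. apply SRep_exists. rewrite (SRep_fib k X tX F _ _ _ _ Hcc).
    symmetry. apply ulim_principal; auto. }
  destruct (qrel_b k X tX cX hX F _ _ Hg) as [a Ha].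
  assert (Ha' : SRep (fun y => y) (ubind XX (fun i => principal (x i))) g a).
  { assert (E : push totproj (push fi XX) = ubind XX (fun i => principal (x i)))
      by (apply uf_ext; cbn; tauto). rewrite <- E. exact Ha. }
  intros eps He. set (d := eps / 5). assert (Hd : d > 0) by (unfold d; lra).
  assert (Hcc1 : SRep (fun s => ulim tX (fun y => y) (mu s)) XX g c) by (rewrite Exf; exact Hcc).
  assert (Hcc2 : SRep (fun s => ulim tX (fun y => y) (principal (x s))) XX g c) by (rewrite Exp; exact Hcc).
  assert (A1 := SRep_assoc k X tX F XX mu (fun y => y) g b c c' Hb Hcc1 Hc' d Hd).
  assert (A2 := SRep_assoc k X tX F XX (fun i => principal (x i)) (fun y => y) g a c c'' Ha'
                  Hcc2 Hc'' d Hd).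
  assert (A3 := qrel_use k X tX F _ _ _ Hg Ha d Hd). cbn in A3.
  cbn in A1. cbn in A2. cbn.
  apply (u_up (u_and3 _ _ _ _ A1 A2 A3)).
  intros i [h1 [h2 h3]].
  rewrite (SRep_principal k X tX F _ _ _ _ (Hc'' i)) in h2.
  assert (D1 : Dlt (c i) (fi i) (d + d)).
  { apply Dlt_sym in h3. apply Dlt_sym in h2. exact (Dlt_trans k X tX F _ _ _ _ _ h2 h3). }
  destruct (qrel_b k X tX cX hX F _ _ (Hi i)) as [ai Hai].
  pose proof (SRep_lip k X tX F _ _ _ _ _ _ _ (Hc' i) Hai D1 d Hd) as L.
  pose proof (qrel_use k X tX F _ _ _ (Hi i) Hai d Hd) as Q.
  unfold mu in h1, L. cbn in h1, L.
  apply (u_up (u_and3 _ _ _ _ h1 L Q)). intros e [r1 [r2 r3]].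
  pose proof (Dlt_trans k X tX F _ _ _ _ _ r1 r2) as D2.
  apply Dlt_sym in D2.
  pose proof (Dlt_trans k X tX F _ _ _ _ _ r3 D2) as D3.
  eapply Dlt_mono; [exact D3|]. unfold d; lra.
Qed.
End Barr.


Section Topo.
Variables (k : R) (X : Type) (tX : Topology X).
Hypothesis cX : compact_space tX.
Hypothesis hX : hausdorff_space tX.
Variable F : LeftUlt k X tX.

Definition qopen (U : Tot F -> Prop) : Prop :=
  forall eta f, qrel F eta f -> U f -> umem eta U.

Definition tauq : Topology (Tot F).
Proof.
  refine {| isopen := qopen |}.
  - intros eta f _ _. apply u_true; auto.
  - intros U V hU hV eta f H [Uf Vf]. apply u_inter; eauto.
  - intros I U hU eta f H [i Ui]. apply (u_up (hU i eta f H Ui)). eauto.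
Defined.

Definition qcl (A : Tot F -> Prop) (g : Tot F) : Prop :=
  exists eta, umem eta A /\ qrel F eta g.

Lemma qcl_open (A : Tot F -> Prop) : qopen (fun g => ~ qcl A g).
Proof.
  intros eta g Hq Cg. destruct (u_ultra _ eta (fun g => ~ qcl A g)) as [|H]; auto.
  exfalso. apply Cg.
  destruct (fchoice (fun h (e : Ultrafilter (Tot F)) => qrel F e h /\ (qcl A h -> umem e A)))
    as [et Het].
  { intro h. destruct (classic (qcl A h)) as [[e [h1 h2]]|N].
    - exists e. auto.
    - exists (principal h). split; [apply qrel_principal; auto|tauto]. }
  exists (ubind eta et). split.
  - cbn. apply (u_up H). intros h Hh. apply Het. apply NNPP; exact Hh.
  - apply (qrel_mult k X tX cX hX F _ eta et (fun h => h)).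
    + intro h; apply Het.
    + rewrite push_id; exact Hq.
Qed.

Lemma tauq_conv eta f : conv tauq eta f <-> qrel F eta f.
Proof.
  split; [|intros H U oU Uf; exact (oU eta f H Uf)].
  intros Hc.
  assert (S1 : forall A, umem eta A -> qcl A f).
  { intros A HA. apply NNPP; intro N.
    pose proof (Hc _ (qcl_open A) N) as H1.
    destruct (u_inh _ _ (u_inter HA H1)) as [h [Ah Nh]].
    apply Nh. exists (principal h). split; [exact Ah|apply qrel_principal; auto]. }
  destruct (fchoice (fun (A : Tot F -> Prop) (e : Ultrafilter (Tot F)) =>
              qrel F e f /\ (umem eta A -> umem e A))) as [et Het].
  { intro A. destruct (classic (umem eta A)) as [HA|N].
    - destruct (S1 A HA) as [e [h1 h2]]. exists e; auto.
    - exists (principal f). split; [apply qrel_principal; auto|tauto]. }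
  destruct (UL (Tot F -> Prop) (fun P => exists B, umem eta B /\
                forall A, umem eta A -> (forall e, A e -> B e) -> P A)) as [XX HXX].
  - exists (fun _ => True). split; [apply u_true; auto|auto].
  - intros P Q [B1 [h1 k1]] [B2 [h2 k2]]. exists (fun e => B1 e /\ B2 e).
    split; [apply u_inter; auto|]. intros A HA sA. split.
    + apply k1; auto. intros e Ae; apply (sA e Ae).
    + apply k2; auto. intros e Ae; apply (sA e Ae).
  - intros P [B [h1 k1]]. exists B. apply k1; auto.
  - assert (Q : qrel F (ubind XX et) f).
    { apply (qrel_mult k X tX cX hX F _ XX et (fun _ => f)).
      + intro A; apply Het.
      + rewrite push_const. apply qrel_principal; auto. }
    assert (E : eta = ubind XX et).
    { apply uf_sub_eq. intros B HB. cbn. apply HXX. exists B. split; auto.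
      intros A HA sA. apply (u_up (proj2 (Het A) HA)). exact sA. }
    rewrite E; exact Q.
Qed.
End Topo.


Lemma umem_congr {S} (u : Ultrafilter S) (E A B : S -> Prop) :
  umem u E -> (forall s, E s -> (A s <-> B s)) -> umem u A -> umem u B.
Proof.
  intros HE H HA. apply (u_up (u_inter HE HA)). intros s [e a]. apply (H s e); auto.
Qed.

Section Bun.
Variables (k : R) (X : Type) (tX : Topology X).
Hypothesis cX : compact_space tX.
Hypothesis hX : hausdorff_space tX.
Variable F : LeftUlt k X tX.
Local Notation Fx y := (cm (LF F y)).
Local Notation Dlt := (Dlt k X tX F).
Local Notation SRep := (SRep k X tX F).
Variable tau : Topology (Tot F).
Hypothesis Htau : forall eta f, conv tau eta f <-> qrel F eta f.

Lemma totdist_rw e1 e2 e1' e2' h h' : e1 = e1' -> e2 = e2' ->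
  totdist F e1 e2 h = totdist F e1' e2' h'.
Proof. intros E1 E2. subst. f_equal. apply proof_irrelevance. Qed.

Lemma tot_eta (e : Tot F) y (h : projT1 e = y) :
  e = existT _ y (eq_rect _ (fun y => car (cm (LF F y))) (projT2 e) _ h).
Proof. destruct e as [y' a]. simpl in h. subst. reflexivity. Qed.

Lemma Dlt_of e g (h : totproj e = totproj g) r : totdist F e g h < r -> Dlt e g r.
Proof. intro H. exists h. exact H. Qed.

Lemma Dlt_to e g (h : totproj e = totproj g) r : Dlt e g r -> totdist F e g h < r.
Proof.
  intros [h' H]. rewrite (proof_irrelevance _ h h'). exact H.
Qed.

Lemma push_fst_snd (zeta : Ultrafilter (Tot F * Tot F)) :
  umem zeta (fun p => projT1 (fst p) = projT1 (snd p)) ->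
  push totproj (push fst zeta) = push totproj (push snd zeta).
Proof.
  intros H. apply uf_ext. intro A. cbn. split; apply umem_congr with (1 := H);
  intros p E; unfold totproj; rewrite E; tauto.
Qed.

Lemma bundle_usc r : exists O, prod_open tau tau O /\
     forall f g (h : totproj f = totproj g), totdist F f g h < r <-> O (f, g).
Proof.
  exists (fun p => exists A B, isopen tau A /\ isopen tau B /\ A (fst p) /\ B (snd p) /\
            forall a b (h : totproj a = totproj b), A a -> B b -> totdist F a b h < r).
  split.
  - intros p [A [B [oA [oB [Ap [Bp H]]]]]]. exists A, B. repeat split; auto.
    intros a b Aa Bb. exists A, B. repeat split; auto.
  - intros f g h. split; [|intros [A [B [oA [oB [Af [Bg H]]]]]]; apply H; auto].
    intros Hd. apply NNPP; intro N.
    destruct (UL (Tot F * Tot F) (fun P => exists A B, isopen tau A /\ isopen tau B /\ A f /\ B g /\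
         forall a b, A a -> B b -> projT1 a = projT1 b -> ~ Dlt a b r -> P (a, b))) as [zeta Hz].
    + exists (fun _ => True), (fun _ => True). repeat split; try apply op_full; auto.
    + intros P Q [A1 [B1 [oA1 [oB1 [A1f [B1g H1]]]]]] [A2 [B2 [oA2 [oB2 [A2f [B2g H2]]]]]].
      exists (fun a => A1 a /\ A2 a), (fun b => B1 b /\ B2 b).
      repeat split; try apply op_inter; auto; [apply H1|apply H2]; tauto.
    + intros P [A [B [oA [oB [Af [Bg H]]]]]]. apply NNPP; intro N2. apply N.
      exists A, B. repeat split; auto. intros a b ha Aa Bb. apply NNPP; intro N3.
      apply N2. exists (a, b). apply H; auto. intro D. apply N3. apply Dlt_to; auto.
    + assert (Z0 : umem zeta (fun p => projT1 (fst p) = projT1 (snd p) /\ ~ Dlt (fst p) (snd p) r)).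
      { apply Hz. exists (fun _ => True), (fun _ => True). repeat split; try apply op_full; auto. }
      assert (C1 : qrel F (push fst zeta) f).
      { apply Htau. intros U oU Uf. cbn. apply Hz. exists U, (fun _ => True).
        repeat split; try apply op_full; auto. }
      assert (C2 : qrel F (push snd zeta) g).
      { apply Htau. intros U oU Ug. cbn. apply Hz. exists (fun _ => True), U.
        repeat split; try apply op_full; auto. }
      assert (E : push totproj (push fst zeta) = push totproj (push snd zeta)).
      { apply push_fst_snd. apply (u_up Z0). tauto. }
      destruct (qrel_b k X tX cX hX F _ _ C1) as [b1 Hb1].
      destruct (qrel_b k X tX cX hX F _ _ C2) as [b2 Hb2].
      assert (Hb2' : SRep (fun y => y) (push totproj (push fst zeta)) g b2) by (rewrite E; exact Hb2).
      set (r0 := totdist F f g h) in *. set (d := (r - r0) / 4).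
      assert (Hd' : d > 0) by (unfold d; lra).
      assert (Dfg : Dlt f g (r0 + d)) by (exists h; fold r0; lra).
      pose proof (SRep_lip k X tX F _ _ _ _ _ _ _ Hb1 Hb2' Dfg d Hd') as L. cbn in L.
      pose proof (qrel_use k X tX F _ _ _ C1 Hb1 d Hd') as Q1.
      pose proof (qrel_use k X tX F _ _ _ C2 Hb2 d Hd') as Q2.
      cbn in Q1, Q2.
      destruct (u_inh _ _ (u_inter (u_and3 _ _ _ _ Z0 L Q1) Q2)) as [[a b] [[[E1 N1] [l1 q1]] q2]].
      simpl in *. apply N1. unfold totproj in l1. rewrite E1 in l1, q1.
      apply Dlt_sym in q2.
      pose proof (Dlt_trans k X tX F _ _ _ _ _ (Dlt_trans k X tX F _ _ _ _ _ q1 l1) q2) as D3.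
      eapply Dlt_mono; [exact D3|]. unfold d; lra.
Qed.

Lemma bundle_cont : continuous_map tau tX totproj.
Proof.
  intros V oV. apply open_char. intros eta e Hc Ve.
  apply Htau in Hc. apply qrel_conv in Hc. exact (Hc V oV Ve).
Qed.

Lemma bundle_open : open_map tau tX totproj.
Proof.
  intros U oU. apply open_char. intros mu y Hc [a [Ua Ea]].
  destruct (SRep_exists k X tX F (fun y => y) mu a) as [b Hb].
  { unfold totproj in Ea. rewrite Ea. symmetry. apply ulim_id_conv; auto. }
  pose proof (SRep_fib k X tX F _ _ _ _ Hb) as Fb. simpl in Fb.
  assert (E : push totproj (push b mu) = mu).
  { apply uf_ext; intro A. cbn. unfold totproj. split; apply umem_congr with (E := fun _ => True);
    try (apply u_true; auto); intros s _; rewrite Fb; tauto. }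
  assert (Q : qrel F (push b mu) a).
  { apply (qrel_intro k X tX F _ _ b).
    - rewrite E. unfold totproj in Ea. rewrite Ea. exact Hc.
    - rewrite E. exact Hb.
    - intros eps He. cbn. apply u_true. intro s. rewrite Fb. apply Dlt_refl; auto. }
  apply Htau in Q. pose proof (Q U oU Ua) as HU.
  cbn in HU. apply (u_up HU). intros s Us. exists (b s). split; auto. apply Fb.
Qed.
End Bun.


Section Bun2.
Variables (k : R) (X : Type) (tX : Topology X).
Hypothesis cX : compact_space tX.
Hypothesis hX : hausdorff_space tX.
Variable F : LeftUlt k X tX.
Local Notation Fx y := (cm (LF F y)).
Local Notation Dlt := (Dlt k X tX F).
Local Notation SRep := (SRep k X tX F).
Variable tau : Topology (Tot F).
Hypothesis Htau : forall eta f, conv tau eta f <-> qrel F eta f.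

Lemma bundle_loc (W : Tot F -> Prop) (f : Tot F) : isopen tau W -> W f ->
     exists (V : Tot F -> Prop) (eps : R), isopen tau V /\ V f /\ eps > 0 /\
       let Veps := fun e => exists g (h : totproj e = totproj g), V g /\ totdist F e g h < eps in
       (forall e, V e -> Veps e) /\ (forall e, Veps e -> W e).
Proof.
  intros oW Wf.
  assert (Cl : exists V eps, isopen tau V /\ V f /\ eps > 0 /\
                 forall e g, V g -> Dlt e g eps -> W e).
  { apply NNPP; intro N.
    destruct (UL (Tot F * Tot F) (fun P => exists V eps, isopen tau V /\ V f /\ eps > 0 /\
         forall e g, V g -> Dlt e g eps -> ~ W e -> P (e, g))) as [zeta Hz].
    - exists (fun _ => True), 1. repeat split; try apply op_full; auto; lra.
    - intros P Q [V1 [e1 [o1 [f1 [p1 H1]]]]] [V2 [e2 [o2 [f2 [p2 H2]]]]].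
      exists (fun a => V1 a /\ V2 a), (Rmin e1 e2). repeat split; try apply op_inter; auto.
      + apply Rmin_glb_lt; auto.
      + apply H1; try tauto. eapply Dlt_mono; eauto. apply Rmin_l.
      + apply H2; try tauto. eapply Dlt_mono; eauto. apply Rmin_r.
    - intros P [V [eps [oV [Vf [He H]]]]]. apply NNPP; intro N2. apply N.
      exists V, eps. repeat split; auto. intros e g Vg D. apply NNPP; intro N3.
      apply N2. exists (e, g). apply H; auto.
    - assert (Z1 : forall eps, eps > 0 -> umem zeta (fun p => Dlt (fst p) (snd p) eps /\ ~ W (fst p))).
      { intros eps He. apply Hz. exists (fun _ => True), eps. repeat split; try apply op_full; auto. }
      assert (C2 : qrel F (push snd zeta) f).
      { apply Htau. intros U oU Uf. cbn. apply Hz. exists U, 1.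
        repeat split; auto; lra. }
      assert (E : push totproj (push fst zeta) = push totproj (push snd zeta)).
      { apply push_fst_snd. apply (u_up (Z1 1 ltac:(lra))). intros p [D _].
        exact (Dlt_fib k X tX F _ _ _ D). }
      destruct (qrel_b k X tX cX hX F _ _ C2) as [b Hb].
      assert (C1 : qrel F (push fst zeta) f).
      { apply (qrel_intro k X tX F _ _ b).
        - rewrite E. apply qrel_conv; auto.
        - rewrite E. exact Hb.
        - intros eps He. pose proof (qrel_use k X tX F _ _ _ C2 Hb (eps/2) ltac:(lra)) as Q.
          cbn in Q |- *. apply (u_up (u_inter Q (Z1 (eps/2) ltac:(lra)))).
          intros [a c] [q [D _]]. simpl in *.
          rewrite (Dlt_fib k X tX F _ _ _ D).
          pose proof (Dlt_trans k X tX F _ _ _ _ _ D q) as D2.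
          eapply Dlt_mono; [exact D2|lra]. }
      apply Htau in C1. pose proof (C1 W oW Wf) as HW. cbn in HW.
      destruct (u_inh _ _ (u_inter HW (Z1 1 ltac:(lra)))) as [p [a [_ b']]]. contradiction. }
  destruct Cl as [V [eps [oV [Vf [He H]]]]].
  exists V, eps. split; auto. split; auto. split; auto. simpl. split.
  - intros e Ve. exists e, eq_refl. split; auto. apply (Dlt_to k X tX F). apply Dlt_refl; auto.
  - intros e [g [h [Vg D]]]. apply (H e g Vg). apply (Dlt_of k X tX F _ _ h). exact D.
Qed.

Lemma bundle_full : is_bundle k tau tX totproj (totdist F).
Proof.
  unfold is_bundle. split; [|split; [|split; [|split; [|split; [|split; [|split; [|split; [|split; [|split]]]]]]]]].
  - intro x. destruct (proj1 (cm_ax (LF F x))) as [a]. exists (existT _ x a). reflexivity.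
  - intros [y a] h. rewrite (totdist_mk k X tX F). apply (HFb k X tX F).
  - intros [y1 a1] [y2 a2] h H. unfold totproj in h; simpl in h. subst y2.
    rewrite (totdist_mk k X tX F) in H. f_equal. apply (kcm_zero k _ (HF k X tX F _)). exact H.
  - intros [y1 a1] [y2 a2] h. unfold totproj in h; simpl in h. subst y2.
    rewrite !(totdist_mk k X tX F). apply (kcm_sym k _ (HF k X tX F _)).
  - intros [y1 a1] [y2 a2] [y3 a3] h1 h2 h3. unfold totproj in h1, h2; simpl in h1, h2. subst y2 y3.
    rewrite !(totdist_mk k X tX F). apply (kcm_triang k _ (HF k X tX F _)).
  - intros [y1 a1] [y2 a2] h. unfold totproj in h; simpl in h. subst y2.
    rewrite (totdist_mk k X tX F). apply (HFb k X tX F).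
  - intros x u Hu Hc.
    pose (v := fun n => eq_rect _ (fun y => car (cm (LF F y))) (projT2 (u n)) _ (Hu n)).
    assert (Ev : forall n, u n = existT _ x (v n)) by (intro n; apply (tot_eta k X tX F)).
    assert (Dv : forall m n (h : totproj (u m) = totproj (u n)), totdist F (u m) (u n) h = dst (v m) (v n)).
    { intros m n h. rewrite (totdist_rw k X tX F (u m) (u n) (existT _ x (v m)) (existT _ x (v n)) h eq_refl (Ev m) (Ev n)).
      apply (totdist_mk k X tX F). }
    destruct (HF k X tX F x) as [_ [_ [_ [_ [_ [_ Hcomp]]]]]].
    destruct (Hcomp v) as [l Hl].
    { intros eps He. destruct (Hc eps He) as [N HN]. exists N. intros m n Hm Hn.
      assert (h : totproj (u m) = totproj (u n)) by (rewrite Hu, Hu; reflexivity).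
      rewrite <- (Dv m n h). apply HN; auto. }
    exists (existT _ x l). split; [reflexivity|].
    intros eps He. destruct (Hl eps He) as [N HN]. exists N. intros n h Hn.
    rewrite (totdist_rw k X tX F (u n) (existT _ x l) (existT _ x (v n)) (existT _ x l) h eq_refl (Ev n) eq_refl).
    rewrite (totdist_mk k X tX F). apply HN; auto.
  - intro r. apply (bundle_usc k X tX cX hX F tau Htau).
  - apply (bundle_cont k X tX F tau Htau).
  - apply (bundle_open k X tX cX hX F tau Htau).
  - intros W f oW Wf. apply bundle_loc; auto.
Qed.
End Bun2.


Section Mor.
Variables (k : R) (X : Type) (tX : Topology X).
Hypothesis cX : compact_space tX.
Hypothesis hX : hausdorff_space tX.
Variables F G : LeftUlt k X tX.
Variable alpha : forall x, cm (LF F x) -> cm (LF G x).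
Hypothesis Hal : is_nat_trans F G alpha.

Lemma Dlt_map e1 e2 r : Dlt k X tX F e1 e2 r -> Dlt k X tX G (totmap alpha e1) (totmap alpha e2) r.
Proof.
  destruct e1 as [y1 a1], e2 as [y2 a2]. intro D.
  pose proof (Dlt_fib k X tX F _ _ _ D) as h. simpl in h. subst y2.
  apply Dlt_mk in D. unfold totmap. simpl. apply Dlt_mk.
  eapply Rle_lt_trans; [apply (proj1 Hal)|exact D].
Qed.

Lemma SRep_map {S} (x : S -> X) mu e b b'' :
  SRep k X tX F x mu e b -> SRep k X tX G x mu (totmap alpha e) b'' ->
  Tclose k X tX G mu (fun s => totmap alpha (b s)) b''.
Proof.
  intros Hb Hb''.
  destruct (SRep_up_rep k X tX F _ _ _ _ Hb) as [g [Eg C]].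
  subst e.
  pose proof (SRep_canon k X tX G x mu (alpha _ g)) as Hc.
  pose proof (SRep_close k X tX G _ _ _ _ _ Hb'' Hc) as C2.
  rewrite (proj2 Hal) in C2. unfold up_map in C2.
  pose proof (up_rep_class k S (fun s => cm (LF G (x s))) mu (fun s => HFb k X tX G _)
                (fun s => alpha (x s) (up_rep (sigma F S x mu g) s))) as C3.
  apply close_Tclose in C3.
  intros eps He.
  apply (u_up (u_and3 _ _ _ _ (C (eps/3) ltac:(lra)) (C2 (eps/3) ltac:(lra)) (C3 (eps/3) ltac:(lra)))).
  intros s [h1 [h2 h3]].
  apply Dlt_map in h1. unfold totmap at 2 in h1. simpl in h1.
  apply (Dlt_sym k X tX G) in h2.
  pose proof (Dlt_trans k X tX G _ _ _ _ _ (Dlt_trans k X tX G _ _ _ _ _ h1 (Dlt_sym k X tX G _ _ _ h3)) h2) as D.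
  eapply Dlt_mono; [exact D|lra].
Qed.

Lemma qrel_map eta e : qrel F eta e -> qrel G (push (totmap alpha) eta) (totmap alpha e).
Proof.
  intros Q.
  assert (E : push totproj (push (totmap alpha) eta) = push totproj eta) by (apply uf_ext; cbn; tauto).
  destruct (qrel_b k X tX cX hX F _ _ Q) as [b Hb].
  destruct (SRep_exists k X tX G (fun y => y) (push totproj eta) (totmap alpha e)) as [b'' Hb''].
  { simpl. apply (SRep_fibf k X tX F _ _ _ _ Hb). }
  apply (qrel_intro k X tX G _ _ b'').
  - rewrite E. exact (qrel_conv k X tX F _ _ Q).
  - rewrite E; exact Hb''.
  - intros eps He.
    pose proof (SRep_map _ _ _ _ _ Hb Hb'' (eps/2) ltac:(lra)) as C. cbn in C.
    pose proof (qrel_use k X tX F _ _ _ Q Hb (eps/2) ltac:(lra)) as Q2.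
    cbn. apply (u_up (u_inter C Q2)). intros s [c q].
    apply Dlt_map in q.
    pose proof (Dlt_trans k X tX G _ _ _ _ _ q c) as D.
    unfold totproj in D |- *. simpl. eapply Dlt_mono; [exact D|lra].
Qed.

Lemma morph_full (tauF : Topology (Tot F)) (tauG : Topology (Tot G)) :
  (forall eta f, conv tauF eta f <-> qrel F eta f) ->
  (forall eta f, conv tauG eta f <-> qrel G eta f) ->
  is_bundle_morphism tauF tauG totproj totproj (totdist F) (totdist G) (totmap alpha).
Proof.
  intros HF' HG'. split; [|split].
  - intros V oV. apply open_char. intros eta e Hc Ve.
    apply HF' in Hc. apply qrel_map in Hc. apply HG' in Hc. exact (Hc V oV Ve).
  - intros e. reflexivity.
  - intros [y1 a1] [y2 a2] h h'. unfold totproj in h; simpl in h. subst y2.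
    unfold totmap. simpl. rewrite (totdist_mk k X tX G), (totdist_mk k X tX F). apply (proj1 Hal).
Qed.
End Mor.

Theorem mainTheorem2 (k : R) (X : Type) (tX : Topology X) :
  compact_space tX -> hausdorff_space tX ->
  (* L on objects *)
  (forall F : LeftUlt k X tX,
     (exists tau : Topology (Tot F),
        forall eta f, conv tau eta f <-> qrel F eta f) /\
     (forall tau : Topology (Tot F),
        (forall eta f, conv tau eta f <-> qrel F eta f) ->
        is_bundle k tau tX totproj (totdist F))) /\
  (* L on morphisms *)
  (forall (F G : LeftUlt k X tX) (alpha : forall x, cm (LF F x) -> cm (LF G x)),
     is_nat_trans F G alpha ->
     forall (tauF : Topology (Tot F)) (tauG : Topology (Tot G)),
       (forall eta f, conv tauF eta f <-> qrel F eta f) ->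
       (forall eta f, conv tauG eta f <-> qrel G eta f) ->
       is_bundle_morphism tauF tauG totproj totproj (totdist F) (totdist G)
         (totmap alpha)) /\
  (* functoriality *)
  (forall F : LeftUlt k X tX,
     totmap (G := F) (fun x (f : cm (LF F x)) => f) = (fun e => e)) /\
  (forall (F G H : LeftUlt k X tX) (alpha : forall x, cm (LF F x) -> cm (LF G x))
          (beta : forall x, cm (LF G x) -> cm (LF H x)),
     totmap (fun x f => beta x (alpha x f)) = (fun e => totmap beta (totmap alpha e))).
Proof.
  intros cX hX. split; [|split; [|split]].
  - intro F. split.
    + exists (tauq k X tX F). apply tauq_conv; auto.
    + intros tau Htau. apply bundle_full; auto.
  - intros F G alpha Hal tauF tauG HF' HG'. apply morph_full; auto.
  - intro F. apply functional_extensionality. intros [y a]. reflexivity.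
  - intros F G H alpha beta. apply functional_extensionality. intros [y a]. reflexivity.
Qed.
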